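(* Let $m$ be an even positive integer. Then 1) $\Gamma_0(2)^+\begin{bmatrix}1&0\\0&m\end{bmatrix}\Gamma_0(2)=\bigcup_{\gamma\in M_1^m}\Gamma_0(2)^+\gamma$; 2) $\Gamma_0(2)^+\begin{bmatrix}m&0\\0&1\end{bmatrix}\Gamma_0(2)=\bigcup_{\gamma\in M_2^m}\Gamma_0(2)^+\gamma$; 3) $\Gamma_0(2)^+\begin{bmatrix}m&0\\0&1\end{bmatrix}\Gamma_0(2)^+=\Gamma_0(2)^+\begin{bmatrix}1&0\\0&m\end{bmatrix}\Gamma_0(2)^+=\bigcup_{\gamma\in M^m}\Gamma_0(2)^+\gamma$.
   Context: Matrices are elements of $GL_2^+(\mathbb{R})$ considered up to sign. $\Gamma_0(2)=\{\begin{bmatrix}a&b\\c&d\end{bmatrix}\in SL_2(\mathbb{Z}): c\equiv0 \pmod 2\}$, $w_2=2^{-1/2}\begin{bmatrix}0&-1\\2&0\end{bmatrix}$, and $\Gamma_0(2)^+=\Gamma_0(2)\cup\Gamma_0(2)w_2$ is the group generated by $\Gamma_0(2)$ and $w_2$. For a positive integer $m$: $M_1^m=\{\begin{bmatrix}x&y\\0&z\end{bmatrix}: x,y,z\in\mathbb{Z},\ xz=m,\ 0\leq y<z,\ \gcd(x,y,z)=1,\ x\text{ odd}\}$; $S_1^m=\{\begin{bmatrix}x&y\\0&z\end{bmatrix}: xz=m,\ 0\leq y<z,\ \gcd(x,y,z)=1,\ z\text{ odd}\}$; $S_2^m=\{2^{-1/2}\begin{bmatrix}x&y\\0&z\end{bmatrix}: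 xz=2m,\ 0\leq y<z,\ \gcd(x,y,z)=1,\ x,z\text{ even}\}$; $M_2^m=S_1^m\cup S_2^m$, $M^m=M_1^m\cup M_2^m$ (integers $x,y,z$, $x,z>0$). *)

(* Defs.v *)
From HB Require Import structures.
From mathcomp Require Import all_boot all_order all_algebra.
From mathcomp Require Import reals.
Set Implicit Arguments. Unset Strict Implicit. Unset Printing Implicit Defensive.
Import Order.TTheory GRing.Theory Num.Theory.
Local Open Scope ring_scope.

Section Defs.
Variable R : realType.

Definition intmx (a b c d : int) : 'M[R]_2 :=
  \matrix_(i < 2, j < 2)
    (if (i == 0 :> nat) then (if (j == 0 :> nat) then a else b)
     else (if (j == 0 :> nat) then c else d))%:~R.

Definition Gamma0_2 (g : 'M[R]_2) : Prop :=
  exists a b c d : int,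
    g = intmx a b c d /\ a * d - b * c = 1 /\ (2 %| c)%Z.

Definition w2 : 'M[R]_2 := (Num.sqrt (2 : R))^-1 *: intmx 0 (-1) 2 0.

Definition Gamma0_2plus (g : 'M[R]_2) : Prop :=
  Gamma0_2 g \/ exists h, Gamma0_2 h /\ g = h *m w2.

Definition M1 (m : nat) (g : 'M[R]_2) : Prop :=
  exists x y z : int,
    g = intmx x y 0 z /\ 0 < x /\ 0 < z /\ x * z = m%:Z /\ 0 <= y /\ y < z /\
    gcdz (gcdz x y) z = 1 /\ odd `|x|%N.

Definition S1 (m : nat) (g : 'M[R]_2) : Prop :=
  exists x y z : int,
    g = intmx x y 0 z /\ 0 < x /\ 0 < z /\ x * z = m%:Z /\ 0 <= y /\ y < z /\
    gcdz (gcdz x y) z = 1 /\ odd `|z|%N.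

Definition S2 (m : nat) (g : 'M[R]_2) : Prop :=
  exists x y z : int,
    g = (Num.sqrt (2 : R))^-1 *: intmx x y 0 z /\ 0 < x /\ 0 < z /\
    x * z = (2 * m)%:Z /\ 0 <= y /\ y < z /\
    gcdz (gcdz x y) z = 1 /\ ~~ odd `|x|%N /\ ~~ odd `|z|%N.

Definition M2 (m : nat) (g : 'M[R]_2) : Prop := S1 m g \/ S2 m g.
Definition Mm (m : nat) (g : 'M[R]_2) : Prop := M1 m g \/ M2 m g.

Definition dcoset (G : 'M[R]_2 -> Prop) (alpha : 'M[R]_2) (H : 'M[R]_2 -> Prop)
  (g : 'M[R]_2) : Prop :=
  exists a b, G a /\ H b /\ g = a *m alpha *m b.

Definition cosets_union (G : 'M[R]_2 -> Prop) (S : 'M[R]_2 -> Prop)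
  (g : 'M[R]_2) : Prop :=
  exists a gamma, G a /\ S gamma /\ g = a *m gamma.

End Defs.

(* Main.v *)
Require Import Defs.
From HB Require Import structures.
From mathcomp Require Import all_boot all_order all_algebra.
From mathcomp Require Import reals ring lra zify.
Set Implicit Arguments. Unset Strict Implicit. Unset Printing Implicit Defensive.
Import Order.TTheory GRing.Theory Num.Theory.
Local Open Scope ring_scope.

Lemma dvdzB' (d a b : int) : (d %| a + b)%Z -> (d %| b)%Z -> (d %| a)%Z.
Proof.
move=> h1 h2; have -> : a = (a + b) - b by ring.
by apply: rpredB.
Qed.

Lemma NT (X Y Z : int) : X != 0 ->
  (forall p : nat, prime p -> (p%:Z %| X)%Z -> (p%:Z %| Y)%Z -> (p%:Z %| Z)%Z -> False) ->
  exists k u v, u * X + v * (Y + k * Z) = 1.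
Proof.
move=> hX hP.
pose pi : nat_pred := [pred p | ~~ (p %| `|Y|)%N].
pose t := partn `|X|%N pi.
have hX0 : (0 < `|X|)%N by rewrite absz_gt0.
have piP p : prime p -> (p %| t)%N = (p %| `|X|)%N && (p \in pi).
  move=> pp.
  have := pi_of_part pi hX0 p; rewrite !inE !mem_primes pp hX0 /= part_gt0 /=.
  by [].
exists t%:Z.
suff : gcdz X (Y + t%:Z * Z) = 1.
  by case: (Bezoutz X (Y + t%:Z * Z)) => u [v huv] h; exists u, v; rewrite huv.
apply/eqP; rewrite /gcdz -[1]/(1%:Z) eqz_nat; apply/negPn/negP => hn.
set n := gcdn _ _ in hn.
have n_gt0 : (0 < n)%N by rewrite gcdn_gt0 hX0.
have n_gt1 : (1 < n)%N by case: n n_gt0 hn => [|[|]].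
set p := pdiv n.
have pp : prime p by apply: pdiv_prime.
have hpn : (p %| n)%N by apply: pdiv_dvd.
have hpX : (p %| `|X|)%N by apply: dvdn_trans hpn (dvdn_gcdl _ _).
have hpS : (p%:Z %| Y + t%:Z * Z)%Z by rewrite dvdzE; apply: dvdn_trans hpn (dvdn_gcdr _ _).
case hpY: (p %| `|Y|)%N.
- have hpt : ~~ (p %| t)%N by rewrite piP // inE hpY andbF.
  have hpZt : (p%:Z %| t%:Z * Z)%Z.
    apply: (@dvdzB' _ _ Y); first by rewrite addrC.
    by rewrite dvdzE.
  move: hpZt; rewrite dvdzE abszM Euclid_dvdM // (negbTE hpt) /= => hpZ.
  by apply: (hP p pp) => //; rewrite dvdzE.
- have hpt : (p %| t)%N by rewrite piP // hpX inE hpY.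
  apply: (hP p pp).
  + by rewrite dvdzE.
  + apply: dvdzB' hpS _; apply: dvdz_mulr; by rewrite dvdzE.
  + by move: hpY; rewrite -[(p %| `|Y|)%N]/(p%:Z %| Y)%Z (dvdzB' hpS) //; apply: dvdz_mulr; rewrite dvdzE.
Qed.

Lemma gcd_decomp (A C : int) : (A != 0) || (C != 0) ->
  exists g u v a' c', [/\ 0 < g, A = a' * g, C = c' * g, u * a' + v * c' = 1
     & c' = (C %/ gcdz A C)%Z].
Proof.
move=> hAC.
have hg : 0 < gcdz A C.
  by rewrite lt_def gcdz_eq0 negb_and hAC /gcdz.
case: (Bezoutz A C) => u [v huv].
exists (gcdz A C), u, v, (A %/ gcdz A C)%Z, (C %/ gcdz A C)%Z; split => //.
- by rewrite divzK // dvdz_gcdl.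
- by rewrite divzK // dvdz_gcdr.
- apply: (@mulIf _ (gcdz A C)); first by rewrite gt_eqF.
  by rewrite mul1r mulrDl -!mulrA !divzK ?dvdz_gcdl ?dvdz_gcdr.
Qed.

Lemma divmod (y0 z : int) : 0 < z -> exists k y, [/\ y0 = k * z + y, 0 <= y & y < z].
Proof.
move=> hz; exists (y0 %/ z)%Z, (y0 %% z)%Z; split.
- exact: divz_eq.
- by rewrite modz_ge0 // gt_eqF.
- by rewrite ltz_pmod.
Qed.

Lemma caseA (A B C D : int) : 0 < A * D - B * C -> (2 %| C %/ gcdz A C)%Z ->
  exists p q r s x y z,
  p * s - q * r = 1 /\ (2 %| r)%Z /\ A = p * x /\ C = r * x /\
      B = p * y + q * z /\ D = r * y + s * z /\
      0 < x /\ 0 < z /\ 0 <= y /\ y < z /\ x * z = A * D - B * C.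
Proof.
move=> hdet h2.
have hAC : (A != 0) || (C != 0).
  by apply: contraTT hdet; rewrite negb_or !negbK => /andP[/eqP-> /eqP->]; rewrite !mul0r mulr0 subrr.
have [g [u [v [a' [c' [hg hA hC hb hc']]]]]] := gcd_decomp hAC.
rewrite -hc' in h2; clear hc'.
subst A C.
have hz : 0 < a' * D - c' * B.
  have e : a' * g * D - B * (c' * g) = g * (a' * D - c' * B) by ring.
  by move: hdet; rewrite e pmulr_rgt0.
have [k [y [hy0 hy1 hy2]]] := divmod (u * B + v * D) hz.
exists a', (a' * k - v), c', (c' * k + u), g, y, (a' * D - c' * B); do !split => //.
- by transitivity (u * a' + v * c'); [ring | exact: hb].
- have -> : y = u * B + v * D - k * (a' * D - c' * B) by rewrite hy0; ring.
  by transitivity (B * (u * a' + v * c')); [rewrite hb; ring | ring].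
- have -> : y = u * B + v * D - k * (a' * D - c' * B) by rewrite hy0; ring.
  by transitivity (D * (u * a' + v * c')); [rewrite hb; ring | ring].
- ring.
Qed.

Lemma dvd2M (a b : int) : (2 %| a * b)%Z = (2 %| a)%Z || (2 %| b)%Z.
Proof. by rewrite !dvdzE abszM Euclid_dvdM. Qed.

Lemma caseB (A B C D : int) : 0 < A * D - B * C -> (2 %| C)%Z -> (2 %| D)%Z ->
  ~~ (2 %| C %/ gcdz A C)%Z ->
  exists e11 e12 e21 e22 x y z,
  e11 * e22 - e12 * e21 = 1 /\ (2 %| e21)%Z /\ A = 2 * e12 * x /\ C = 2 * e22 * x /\
      B = 2 * e12 * y - e11 * z /\ D = 2 * e22 * y - e21 * z /\
      0 < x /\ 0 < z /\ 0 <= y /\ y < z /\ 2 * x * z = A * D - B * C.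
Proof.
move=> hdet hC2 hD2 h2.
have hAC : (A != 0) || (C != 0).
  by apply: contraTT hdet; rewrite negb_or !negbK => /andP[/eqP-> /eqP->]; rewrite !mul0r mulr0 subrr.
have [g [u [v [a' [c' [hg hA hC hb hc']]]]]] := gcd_decomp hAC.
rewrite -hc' in h2; clear hc'.
subst A C.
have [h hgh] : exists h, g = h * 2.
  by apply/dvdzP; move: hC2; rewrite dvd2M (negbTE h2).
subst g.
have [D' hD'] : exists D', D = D' * 2 by apply/dvdzP.
subst D.
have hh : 0 < h by move: hg; rewrite pmulr_lgt0.
have [U [V hUV]] : exists U V, 2 * U * a' + V * c' = 1.
  case hu: (2 %| u)%Z.
    by case/dvdzP: hu => U hU; exists U, v; transitivity (u * a' + v * c'); [rewrite hU; ring | exact hb].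
  have : (2 %| u + c')%Z by move/negbT: hu => hu; lia.
  case/dvdzP => U hU; exists U, (v - a').
  by transitivity (u * a' + v * c'); [rewrite -[u](addrK c') hU; ring | exact hb].
have hz : 0 < a' * (D' * 2) - c' * B.
  have e : a' * (h * 2) * (D' * 2) - B * (c' * (h * 2)) = (h * 2) * (a' * (D' * 2) - c' * B) by ring.
  by move: hdet; rewrite e pmulr_rgt0.
have [k [y [hy0 hy1 hy2]]] := divmod (U * B + V * D') hz.
have ey : y = U * B + V * D' - k * (a' * (D' * 2) - c' * B) by rewrite hy0; ring.
exists (V - 2 * a' * k), a', (- 2 * U - 2 * c' * k), c', h, y, (a' * (D' * 2) - c' * B).
do !split => //.
- by transitivity (2 * U * a' + V * c'); [ring | exact hUV].
- have -> : - 2 * U - 2 * c' * k = 2 * (- U - c' * k) by ring.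
  by apply: dvdz_mulr.
- ring.
- ring.
- rewrite ey.
  by transitivity (B * (2 * U * a' + V * c')); [rewrite hUV; ring | ring].
- rewrite ey.
  by transitivity (D' * 2 * (2 * U * a' + V * c')); [rewrite hUV; ring | ring].
- ring.
Qed.


Lemma lin1 (F e X Y : int) : e = 1 -> X - Y = (e - 1) * F -> X = Y.
Proof. by move=> -> h; apply/eqP; rewrite -subr_eq0 h subrr mul0r. Qed.

Lemma lin2 (F G e f X Y : int) : e = 1 -> f = 0 -> X - Y = (e - 1) * F + f * G -> X = Y.
Proof. by move=> -> -> h; apply/eqP; rewrite -subr_eq0 h subrr !mul0r addr0. Qed.

Lemma Posz2M (m : nat) : (2 * m)%:Z = 2 * m%:Z :> int.
Proof. by rewrite PoszM. Qed.

Lemma oddz (x : int) : odd `|x|%N = ~~ (2 %| x)%Z.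
Proof. by rewrite dvdzE dvdn2 negbK. Qed.

Lemma gcd1 (x y z : int) :
  (forall d, (d %| x)%Z -> (d %| y)%Z -> (d %| z)%Z -> (d %| 1)%Z) -> gcdz (gcdz x y) z = 1.
Proof.
move=> H.
have g1 := dvdzz (gcdz (gcdz x y) z).
move: (g1) (g1); rewrite {1}dvdz_gcd => /andP[g2 g3]; rewrite dvdz_gcd => /andP[g4 _].
move: g2 g4; rewrite dvdz_gcd => /andP[g5 g6] _.
have := H _ g5 g6 g3.
by rewrite dvdz1 /gcdz /= => /eqP ->.
Qed.

Lemma gcd_prime (x y z : int) (p : nat) : gcdz (gcdz x y) z = 1 -> prime p ->
  (p%:Z %| x)%Z -> (p%:Z %| y)%Z -> (p%:Z %| z)%Z -> False.
Proof.
move=> H pp hx hy hz.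
have : (p%:Z %| gcdz (gcdz x y) z)%Z by rewrite !dvdz_gcd hx hy hz.
rewrite H dvdz1 /= => /eqP p1.
by move: pp; rewrite p1.
Qed.

Lemma prime_dvd2M (p : nat) (y : int) : prime p -> (p%:Z %| 2 * y)%Z -> p = 2%N \/ (p%:Z %| y)%Z.
Proof.
move=> pp; rewrite [(_ %| 2 * y)%Z]dvdzE abszM Euclid_dvdM // => /orP[h|h]; last by right.
by left; apply/eqP; rewrite -(dvdn_prime2 pp).
Qed.

Section M.
Variable R : realType.
Local Notation I := (@intmx R).
Local Notation G := (@Gamma0_2 R).
Local Notation Gp := (@Gamma0_2plus R).
Local Notation w2 := (@w2 R).

Lemma intmxM a b c d e f g h :
  I a b c d *m I e f g h = I (a*e+b*g) (a*f+b*h) (c*e+d*g) (c*f+d*h).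
Proof.
apply/matrixP=> i j; rewrite !mxE big_ord_recr big_ord1 /= !mxE.
by case: i => [[|[|//]] ?]; case: j => [[|[|//]] ?] /=; rewrite !intrD !intrM.
Qed.

Lemma intmx1 : I 1 0 0 1 = 1%:M.
Proof.
by apply/matrixP=> i j; rewrite !mxE; case: i => [[|[|//]] ?]; case: j => [[|[|//]] ?].
Qed.

Definition r2 : R := (Num.sqrt (2:R))^-1.
Lemma r2r2 : r2 * r2 = 2^-1.
Proof. by rewrite /r2 -invfM -expr2 sqr_sqrtr // ler0n. Qed.

Lemma half_intmx a b c d : 2^-1 *: I (2*a) (2*b) (2*c) (2*d) = I a b c d.
Proof.
apply/matrixP=> i j; rewrite !mxE.
case: i => [[|[|//]] ?]; case: j => [[|[|//]] ?] /=; rewrite intrM mulrA mulVf ?mul1r //;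
 by rewrite pnatr_eq0.
Qed.

Lemma w2E : w2 = r2 *: I 0 (-1) 2 0. Proof. by []. Qed.

Lemma scaleM (s t : R) (A B : 'M[R]_2) : (s *: A) *m (t *: B) = (s * t) *: (A *m B).
Proof. by rewrite -scalemxAl -scalemxAr scalerA. Qed.

Lemma G_I a b c d : a*d - b*c = 1 -> (2 %| c)%Z -> G (I a b c d).
Proof. by move=> h1 h2; exists a, b, c, d. Qed.

Lemma G_mul x y : G x -> G y -> G (x *m y).
Proof.
move=> [a [b [c [d [-> [h1 h2]]]]]] [e [f [g [h [-> [h3 h4]]]]]].
rewrite intmxM; apply: G_I.
  have -> : (a * e + b * g) * (c * f + d * h) - (a * f + b * h) * (c * e + d * g)
      = (a*d - b*c) * (e*h - f*g) by ring.
  by rewrite h1 h3 mulr1.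
apply: rpredD; [exact: dvdz_mulr | exact: dvdz_mull].
Qed.

Lemma G_1 : G 1%:M.
Proof. rewrite -intmx1; apply: G_I => //. Qed.

Lemma G_m1 : G (I (-1) 0 0 (-1)).
Proof. by apply: G_I. Qed.

Lemma w2_conj u : G u -> exists u', G u' /\ w2 *m u = u' *m w2.
Proof.
move=> [a [b [c [d [-> [h1 /dvdzP [c' hc]]]]]]].
exists (I d (-c') (-(2*b)) a); split.
  apply: G_I; last by rewrite rpredN dvdz_mulr.
  by transitivity (a*d - b*c); [rewrite hc; ring | exact: h1].
rewrite w2E -scalemxAr -scalemxAl !intmxM hc; congr (_ *: _); congr intmx; ring.
Qed.

Lemma w2w2 : w2 *m w2 = I (-1) 0 0 (-1).
Proof.
rewrite w2E scaleM r2r2 intmxM -[RHS]half_intmx; congr (_ *: _); congr intmx; ring.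
Qed.

Lemma G_Gp x : G x -> Gp x.
Proof. by left. Qed.

Lemma Gp_w2 : Gp w2.
Proof. by right; exists 1%:M; split; [exact: G_1 | rewrite mul1mx]. Qed.

Lemma Gp_mul x y : Gp x -> Gp y -> Gp (x *m y).
Proof.
case=> [Gx | [u [Gu ->]]] [Gy | [v [Gv ->]]].
- by left; apply: G_mul.
- by right; exists (x *m v); split; [apply: G_mul | rewrite mulmxA].
- have [u' [Gu' e]] := w2_conj Gy.
  by right; exists (u *m u'); split; [apply: G_mul | rewrite -mulmxA e mulmxA].
- have [v' [Gv' e]] := w2_conj Gv.
  left; rewrite -mulmxA (mulmxA w2) e -mulmxA w2w2 mulmxA.
  by apply: G_mul; [apply: G_mul | exact: G_m1].
Qed.


Lemma prodU p q r s x y z :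
  I p q r s *m I x y 0 z = I (p*x) (p*y+q*z) (r*x) (r*y+s*z).
Proof. by rewrite intmxM; congr intmx; ring. Qed.

Lemma w2_conj' u : G u -> exists u', G u' /\ u *m w2 = w2 *m u'.
Proof.
move=> [a [b [c [d [-> [h1 /dvdzP [c' hc]]]]]]].
exists (I d (-c') (-(2*b)) a); split.
  apply: G_I; last by rewrite rpredN dvdz_mulr.
  by transitivity (a*d - b*c); [rewrite hc; ring | exact: h1].
rewrite w2E -scalemxAr -scalemxAl !intmxM hc; congr (_ *: _); congr intmx; ring.
Qed.

Lemma Gp_G x y : Gp x -> G y -> Gp (x *m y).
Proof. by move=> hx hy; apply: Gp_mul => //; apply: G_Gp. Qed.

Lemma G_odd a b c d : a*d - b*c = 1 -> (2 %| c)%Z -> ~~ (2 %| a)%Z /\ ~~ (2 %| d)%Z.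
Proof.
move=> h hc; split; apply/negP => h2.
  have : (2 %| a*d - b*c)%Z by apply: rpredB; [apply: dvdz_mulr | apply: dvdz_mull].
  by rewrite h.
have : (2 %| a*d - b*c)%Z by apply: rpredB; [apply: dvdz_mull | apply: dvdz_mull].
by rewrite h.
Qed.

Lemma part1 (m : nat) (m_gt0 : (0 < m)%N) (m_even : ~~ odd m) (g : 'M[R]_2) :
  dcoset Gp (I 1 0 0 m%:Z) G g <-> cosets_union Gp (@M1 R m) g.
Proof.
have hm2 : (2 %| m%:Z)%Z by rewrite dvdzE /= dvdn2.
split.
- move=> [a [b [Ga [[b11 [b12 [b21 [b22 [-> [hdb hb21]]]]]] ->]]]].
  have [o11 o22] := G_odd hdb hb21.
  have eM : I 1 0 0 m%:Z *m I b11 b12 b21 b22 = I b11 b12 (m%:Z * b21) (m%:Z * b22).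
    by rewrite intmxM; congr intmx; ring.
  have hdet : 0 < b11 * (m%:Z * b22) - b12 * (m%:Z * b21).
    have -> : b11 * (m%:Z * b22) - b12 * (m%:Z * b21) = m%:Z * (b11 * b22 - b12 * b21) by ring.
    by rewrite hdb mulr1 ltz_nat.
  have hpar : (2 %| (m%:Z * b21) %/ gcdz b11 (m%:Z * b21))%Z.
    have := divzK (dvdz_gcdr b11 (m%:Z * b21)).
    set c' := ((m%:Z * b21) %/ _)%Z => ec.
    have : (2 %| c' * gcdz b11 (m%:Z * b21))%Z by rewrite ec; apply: dvdz_mulr.
    rewrite dvd2M => /orP[//|h]; exfalso.
    by move/negP: o11; apply; apply: dvdz_trans h (dvdz_gcdl _ _).
  have [p [q [r [s [x [y [z [hps [hr [hA [hC [hB [hD [hx [hz [hy0 [hy1 hxz]]]]]]]]]]]]]]]]] :=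
    caseA hdet hpar.
  exists (a *m I p q r s), (I x y 0 z); split; first by apply: Gp_G => //; apply: G_I.
  split; last by rewrite -!mulmxA eM prodU -hA -hB -hC -hD.
  exists x, y, z; do !split => //.
  + by rewrite hxz; transitivity (m%:Z * (b11 * b22 - b12 * b21)); [ring | rewrite hdb mulr1].
  + apply: gcd1 => d hdx hdy hdz; suff : (d %| b11 * b22 - b12 * b21)%Z by rewrite hdb.
    apply: rpredB; apply: dvdz_mulr; first by rewrite hA; apply: dvdz_mull.
    by rewrite hB; apply: rpredD; apply: dvdz_mull.
  + by rewrite oddz; apply: contra o11 => h; rewrite hA; apply: dvdz_mull.
- move=> [a [gam [Ga [[x [y [z [-> [hx [hz [hxz [hy0 [hy1 [hg hox]]]]]]]]]] ->]]]].
  rewrite oddz in hox.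
  have [k [u [v huv]]] : exists k u v, u * x + v * (2 * y + k * (2 * z)) = 1.
    apply: NT; first by rewrite gt_eqF.
    move=> p pp hpx /(prime_dvd2M pp) [p2|hpy].
      by subst p; move: hox; rewrite hpx.
    move/(prime_dvd2M pp) => [p2|hpz].
      by subst p; move: hox; rewrite hpx.
    exact: (gcd_prime hg pp hpx hpy hpz).
  exists (a *m I (1 + 2 * k * (-v) * z) (-k) (- (2 * (-v) * z)) 1), (I x (y + k * z) (2 * (-v)) u).
  split; first by apply: Gp_G => //; apply: G_I; [ring | rewrite rpredN; apply: dvdz_mulr; apply: dvdz_mulr].
  split; first by apply: G_I; [apply: (@lin1 1 _ _ _ huv); ring | apply: dvdz_mulr].
  rewrite -!mulmxA; congr (_ *m _); rewrite -hxz !intmxM; congr intmx.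
  + ring.
  + by apply: (@lin1 (k*z) _ _ _ huv); ring.
  + ring.
  + by apply: (@lin1 (-z) _ _ _ huv); ring.
Qed.

Lemma Gp_Gw2 u : G u -> Gp (u *m w2).
Proof. by move=> hu; right; exists u. Qed.

Lemma part2 (m : nat) (m_gt0 : (0 < m)%N) (m_even : ~~ odd m) (g : 'M[R]_2) :
  dcoset Gp (I m%:Z 0 0 1) G g <-> cosets_union Gp (@M2 R m) g.
Proof.
have hm2 : (2 %| m%:Z)%Z by rewrite dvdzE /= dvdn2.
split.
- move=> [a [b [Ga [[b11 [b12 [b21 [b22 [-> [hdb hb21]]]]]] ->]]]].
  have [o11 o22] := G_odd hdb hb21.
  case: Ga => [Ga | [u [Gu ->]]].
  + have eM : I m%:Z 0 0 1 *m I b11 b12 b21 b22 = I (m%:Z * b11) (m%:Z * b12) b21 b22.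
      by rewrite intmxM; congr intmx; ring.
    have hdet : 0 < m%:Z * b11 * b22 - m%:Z * b12 * b21.
      have -> : m%:Z * b11 * b22 - m%:Z * b12 * b21 = m%:Z * (b11 * b22 - b12 * b21) by ring.
      by rewrite hdb mulr1 ltz_nat.
    case hpar: (2 %| b21 %/ gcdz (m%:Z * b11) b21)%Z.
    * have [p [q [r [s [x [y [z [hps [hr [hA [hC [hB [hD [hx [hz [hy0 [hy1 hxz]]]]]]]]]]]]]]]]] :=
        caseA hdet hpar.
      have [_ os] := G_odd hps hr.
      exists (a *m I p q r s), (I x y 0 z); split; first by apply: G_Gp; apply: G_mul => //; apply: G_I.
      split; last by rewrite -!mulmxA eM prodU -hA -hB -hC -hD.
      left; exists x, y, z; do !split => //.
      -- by rewrite hxz; transitivity (m%:Z * (b11 * b22 - b12 * b21)); [ring | rewrite hdb mulr1].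
      -- apply: gcd1 => d hdx hdy hdz; suff : (d %| b11 * b22 - b12 * b21)%Z by rewrite hdb.
         apply: rpredB; [apply: dvdz_mull | apply: dvdz_mull]; first by rewrite hD; apply: rpredD; apply: dvdz_mull.
         by rewrite hC; apply: dvdz_mull.
      -- rewrite oddz; apply: contra o22 => h; rewrite hD; apply: rpredD; first by apply: dvdz_mulr.
         by apply: dvdz_mull.
    * have hdet2 : 0 < (m%:Z * b11 * 2) * (b22 * 2) - (m%:Z * b12 * 2) * (b21 * 2).
        have -> : (m%:Z * b11 * 2) * (b22 * 2) - (m%:Z * b12 * 2) * (b21 * 2) =
          (m%:Z * b11 * b22 - m%:Z * b12 * b21) * 4 by ring.
        by rewrite pmulr_lgt0.
      have hpar2 : ~~ (2 %| (b21 * 2) %/ gcdz (m%:Z * b11 * 2) (b21 * 2))%Z.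
        by rewrite -mulz_gcdl /= divzMpr // hpar.
      have [e11 [e12 [e21 [e22 [x [y [z [he [he21 [hA [hC [hB [hD [hx [hz [hy0 [hy1 hxz]]]]]]]]]]]]]]]]] :=
        caseB hdet2 (dvdz_mull _ (dvdzz 2)) (dvdz_mull _ (dvdzz 2)) hpar2.
      have [oe11 oe22] := G_odd he he21.
      have [e21' he21'] : exists e21', e21 = e21' * 2 by apply/dvdzP.
      have hC' : b21 = e22 * x by apply: (@mulIf _ 2) => //; rewrite hC; ring.
      have hD' : b22 = e22 * y - e21' * z by apply: (@mulIf _ 2) => //; rewrite hD he21'; ring.
      exists (a *m (I e11 e12 e21 e22 *m w2)), (r2 *: I x y 0 z).
      split; first by apply: Gp_mul; [exact: G_Gp | apply: Gp_Gw2; apply: G_I].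
      split; last first.
        rewrite -!mulmxA eM; congr (_ *m _).
        rewrite w2E mulmxA -(scalemxAr r2 (I e11 e12 e21 e22)) scaleM r2r2 !intmxM -[LHS]half_intmx; congr (_ *: _); congr intmx.
        ++ by rewrite [LHS]mulrC hA; ring.
        ++ by rewrite [LHS]mulrC hB; ring.
        ++ by rewrite [LHS]mulrC hC; ring.
        ++ by rewrite [LHS]mulrC hD; ring.
      right; exists x, y, z; do !split => //.
      -- rewrite Posz2M; apply: (@mulfI _ 2) => //; rewrite mulrA hxz.
         by apply: (@lin1 (4 * m%:Z) _ _ _ hdb); ring.
      -- apply: gcd1 => d hdx hdy hdz; suff : (d %| b11 * b22 - b12 * b21)%Z by rewrite hdb.
         apply: rpredB; [apply: dvdz_mull | apply: dvdz_mull]; last by rewrite hC'; apply: dvdz_mull.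
         by rewrite hD'; apply: rpredB; apply: dvdz_mull.
      -- rewrite oddz negbK.
         have : (2 %| e22 * x)%Z by rewrite -hC'.
         by rewrite dvd2M (negbTE oe22).
      -- rewrite oddz negbK.
         have : (2 %| e11 * z)%Z.
           have -> : e11 * z = 2 * e12 * y - m%:Z * b12 * 2 by rewrite hB; ring.
           by apply: rpredB; [apply: dvdz_mulr; apply: dvdz_mulr | apply: dvdz_mull].
         by rewrite dvd2M (negbTE oe11).
  + have eP : w2 *m (I m%:Z 0 0 1 *m I b11 b12 b21 b22) =
        r2 *: I (-b21) (-b22) (m%:Z * b11 * 2) (m%:Z * b12 * 2).
      by rewrite w2E -scalemxAl !intmxM; congr (_ *: _); congr intmx; ring.
    have hdet : 0 < (-b21) * (m%:Z * b12 * 2) - (-b22) * (m%:Z * b11 * 2).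
      have -> : (-b21) * (m%:Z * b12 * 2) - (-b22) * (m%:Z * b11 * 2) =
        (b11 * b22 - b12 * b21) * (m%:Z * 2) by ring.
      by rewrite hdb mul1r pmulr_lgt0 // ltz_nat.
    case hpar: (2 %| (m%:Z * b11 * 2) %/ gcdz (-b21) (m%:Z * b11 * 2))%Z.
    * have [p [q [r [s [x [y [z [hps [hr [hA [hC [hB [hD [hx [hz [hy0 [hy1 hxz]]]]]]]]]]]]]]]]] :=
        caseA hdet hpar.
      have [op os] := G_odd hps hr.
      exists (u *m I p q r s), (r2 *: I x y 0 z).
      split; first by apply: G_Gp; apply: G_mul => //; apply: G_I.
      split; last by rewrite -!mulmxA eP; congr (_ *m _); rewrite -scalemxAr prodU -hA -hB -hC -hD.
      right; exists x, y, z; do !split => //.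
      -- rewrite Posz2M hxz.
         by apply: (@lin1 (2 * m%:Z) _ _ _ hdb); ring.
      -- apply: gcd1 => d hdx hdy hdz; suff : (d %| b11 * b22 - b12 * b21)%Z by rewrite hdb.
         have h21 : (d %| b21)%Z by rewrite -rpredN hA; apply: dvdz_mull.
         have h22 : (d %| b22)%Z by rewrite -rpredN hB; apply: rpredD; apply: dvdz_mull.
         by apply: rpredB; apply: dvdz_mull.
      -- rewrite oddz negbK.
         have : (2 %| p * x)%Z by rewrite -hA rpredN.
         by rewrite dvd2M (negbTE op).
      -- rewrite oddz negbK.
         have : (2 %| s * z)%Z.
           have -> : s * z = m%:Z * b12 * 2 - r * y by rewrite hD; ring.
           by apply: rpredB; [apply: dvdz_mull | apply: dvdz_mulr].
         by rewrite dvd2M (negbTE os).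
    * have [e11 [e12 [e21 [e22 [x [y [z [he [he21 [hA [hC [hB [hD [hx [hz [hy0 [hy1 hxz]]]]]]]]]]]]]]]]] :=
        caseB hdet (dvdz_mull _ (dvdzz 2)) (dvdz_mull _ (dvdzz 2)) (negbT hpar).
      exists (u *m (I e11 e12 e21 e22 *m w2)), (I x y 0 z).
      split; first by apply: Gp_mul; [exact: G_Gp | apply: Gp_Gw2; apply: G_I].
      split; last first.
        rewrite -!mulmxA eP; congr (_ *m _).
        rewrite w2E -scalemxAl -scalemxAr !intmxM; congr (_ *: _); congr intmx.
        ++ by rewrite hA; ring.
        ++ by rewrite hB; ring.
        ++ by rewrite hC; ring.
        ++ by rewrite hD; ring.
      left; exists x, y, z; do !split => //.
      -- apply: (@mulfI _ 2) => //; rewrite mulrA hxz.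
         by apply: (@lin1 (2 * m%:Z) _ _ _ hdb); ring.
      -- apply: gcd1 => d hdx hdy hdz; suff : (d %| b11 * b22 - b12 * b21)%Z by rewrite hdb.
         have h21 : (d %| b21)%Z by rewrite -rpredN hA; apply: dvdz_mull.
         have h22 : (d %| b22)%Z by rewrite -rpredN hB; apply: rpredB; apply: dvdz_mull.
         by apply: rpredB; apply: dvdz_mull.
      -- rewrite oddz; apply: contra o22 => h; rewrite -rpredN hB.
         by apply: rpredB; [apply: dvdz_mulr; apply: dvdz_mulr | apply: dvdz_mull].
- move=> [a [gam [Ga [[[x [y [z [-> [hx [hz [hxz [hy0 [hy1 [hg hoz]]]]]]]]]] |
      [x [y [z [-> [hx [hz [hxz [hy0 [hy1 [hg [hex hez]]]]]]]]]]]] ->]]]].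
  + rewrite oddz in hoz.
    have [k [u [v huv]]] : exists k u v, u * (2 * x) + v * (2 * y + k * z) = 1.
      apply: NT; first by rewrite mulf_eq0 negb_or (gt_eqF hx).

      move=> p pp hpx hpy hpz.
      have p2 : p <> 2%N by move=> e; subst p; move: hoz; rewrite hpz.
      case: (prime_dvd2M pp hpx) => // hpx'.
      case: (prime_dvd2M pp hpy) => // hpy'.
      exact: (gcd_prime hg pp hpx' hpy' hpz).
    exists (a *m I k (y * v + x * u) (-2) (z * v)), (I v (-u) (2 * x) (2 * y + k * z)).
    split; first by apply: Gp_G => //; apply: G_I; first by apply: (@lin1 1 _ _ _ huv); ring.
    split; first by apply: G_I; [apply: (@lin1 1 _ _ _ huv); ring | apply: dvdz_mulr].
    rewrite -!mulmxA; congr (_ *m _); rewrite -hxz !intmxM; congr intmx.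
    * by apply: (@lin1 (-x) _ _ _ huv); ring.
    * by apply: (@lin1 (-y) _ _ _ huv); ring.
    * ring.
    * by apply: (@lin1 (-z) _ _ _ huv); ring.
  + rewrite oddz negbK in hex; rewrite oddz negbK in hez.
    have [k [u [v huv]]] : exists k u v, u * x + v * (y + k * z) = 1.
      apply: NT; first by rewrite gt_eqF.
      move=> p pp; exact: gcd_prime hg pp.
    have hf : x * z - 2 * m%:Z = 0 by rewrite -Posz2M hxz subrr.
    exists (a *m (I (- (x * u) - y * v) k (- (z * v)) (-1) *m w2)), (I v (-u) x (y + k * z)).
    split.
      apply: Gp_mul => //; apply: Gp_Gw2; apply: G_I; first by apply: (@lin1 1 _ _ _ huv); ring.
      by rewrite rpredN; apply: dvdz_mulr.
    split; first by apply: G_I => //; apply: (@lin1 1 _ _ _ huv); ring.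
    rewrite -!mulmxA; congr (_ *m _).
    rewrite w2E -scalemxAl -scalemxAr !intmxM; congr (_ *: _); congr intmx.
    * by apply: (@lin2 (-x) (k * v) _ _ _ _ huv hf); ring.
    * by apply: (@lin2 (-y) (-(k * u)) _ _ _ _ huv hf); ring.
    * by apply: (@lin2 0 (-v) _ _ _ _ huv hf); ring.
    * by apply: (@lin2 (-z) u _ _ _ _ huv hf); ring.
Qed.

Definition Wi := w2 *m w2 *m w2.

Lemma WiW : Wi *m w2 = 1%:M.
Proof. by rewrite /Wi -!mulmxA (mulmxA w2 w2) w2w2 intmxM -intmx1; congr intmx; ring. Qed.

Lemma WWi : w2 *m Wi = 1%:M.
Proof. by rewrite /Wi -!mulmxA (mulmxA w2 w2) w2w2 intmxM -intmx1; congr intmx; ring. Qed.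

Lemma Gp_Wi : Gp Wi.
Proof. by apply: Gp_mul; [apply: Gp_mul|]; apply: Gp_w2. Qed.

Lemma alphaW (m : nat) : I 1 0 0 m%:Z *m w2 = w2 *m I m%:Z 0 0 1.
Proof. by rewrite w2E -scalemxAl -scalemxAr !intmxM; congr (_ *: _); congr intmx; ring. Qed.

Lemma part3a (m : nat) (g : 'M[R]_2) :
  dcoset Gp (I m%:Z 0 0 1) Gp g <-> dcoset Gp (I 1 0 0 m%:Z) Gp g.
Proof.
have key : Wi *m I 1 0 0 m%:Z *m w2 = I m%:Z 0 0 1.
  by rewrite -mulmxA alphaW mulmxA WiW mul1mx.
have key2 : w2 *m I m%:Z 0 0 1 *m Wi = I 1 0 0 m%:Z.
  by rewrite -alphaW -mulmxA WWi mulmx1.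
split.
- move=> [a [b [Ga [Gb ->]]]]; exists (a *m Wi), (w2 *m b).
  split; first by apply: Gp_mul => //; apply: Gp_Wi.
  split; first by apply: Gp_mul => //; apply: Gp_w2.
  by rewrite -key !mulmxA.
- move=> [a [b [Ga [Gb ->]]]]; exists (a *m w2), (Wi *m b).
  split; first by apply: Gp_mul => //; apply: Gp_w2.
  split; first by apply: Gp_mul => //; apply: Gp_Wi.
  by rewrite -key2 !mulmxA.
Qed.

Lemma part3b (m : nat) (m_gt0 : (0 < m)%N) (m_even : ~~ odd m) (g : 'M[R]_2) :
  dcoset Gp (I 1 0 0 m%:Z) Gp g <-> cosets_union Gp (@Mm R m) g.
Proof.
split.
- move=> [a [b [Ga [Gb ->]]]].
  case: Gb => [Gb | [u [Gu ->]]].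
    have [a' [gam [Ga' [H1 e]]]] := (part1 m_gt0 m_even (a *m I 1 0 0 m%:Z *m b)).1
      (ex_intro _ a (ex_intro _ b (conj Ga (conj Gb erefl)))).
    by exists a', gam; split => //; split => //; left.
  have [u' [Gu' e]] := w2_conj' Gu.
  have e2 : a *m I 1 0 0 m%:Z *m (u *m w2) = (a *m w2) *m I m%:Z 0 0 1 *m u'.
    by rewrite e mulmxA -(mulmxA a) alphaW !mulmxA.
  have Gaw : Gp (a *m w2) by apply: Gp_mul => //; apply: Gp_w2.
  have [a' [gam [Ga' [H2 e']]]] := (part2 m_gt0 m_even ((a *m w2) *m I m%:Z 0 0 1 *m u')).1
      (ex_intro _ (a *m w2) (ex_intro _ u' (conj Gaw (conj Gu' erefl)))).
  by exists a', gam; rewrite e2; split => //; split => //; right.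
- move=> [a [gam [Ga [[H1|H2] ->]]]].
    have [a' [b' [Ga' [Gb' e]]]] := (part1 m_gt0 m_even (a *m gam)).2
      (ex_intro _ a (ex_intro _ gam (conj Ga (conj H1 erefl)))).
    by exists a', b'; split => //; split => //; apply: G_Gp.
  have [a' [b' [Ga' [Gb' e]]]] := (part2 m_gt0 m_even (a *m gam)).2
      (ex_intro _ a (ex_intro _ gam (conj Ga (conj H2 erefl)))).
  apply/(part3a m (a *m gam)).
  by exists a', b'; split => //; split => //; apply: G_Gp.
Qed.

End M.

Theorem proposition2p1 (R : realType) (m : nat) (m_gt0 : (0 < m)%N)
    (m_even : ~~ odd m) :
  (forall g : 'M[R]_2,
      dcoset (@Gamma0_2plus R) (@intmx R 1 0 0 m%:Z) (@Gamma0_2 R) g <->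
      cosets_union (@Gamma0_2plus R) (@M1 R m) g) /\
  (forall g : 'M[R]_2,
      dcoset (@Gamma0_2plus R) (@intmx R m%:Z 0 0 1) (@Gamma0_2 R) g <->
      cosets_union (@Gamma0_2plus R) (@M2 R m) g) /\
  (forall g : 'M[R]_2,
      (dcoset (@Gamma0_2plus R) (@intmx R m%:Z 0 0 1) (@Gamma0_2plus R) g <->
       dcoset (@Gamma0_2plus R) (@intmx R 1 0 0 m%:Z) (@Gamma0_2plus R) g) /\
      (dcoset (@Gamma0_2plus R) (@intmx R 1 0 0 m%:Z) (@Gamma0_2plus R) g <->
       cosets_union (@Gamma0_2plus R) (@Mm R m) g)).
Proof.
split; first by move=> g; apply: part1.
split; first by move=> g; apply: part2.
by move=> g; split; [apply: part3a | apply: part3b].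
Qed.
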